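(* An iterated graph system satisfies conditions (GR1) and (GR2) if and only if its replacement graphs have uniformly bounded degree, i.e. \[ \sup_{w\in W_\#}\deg(w)<\infty, \] where $\deg(w)$ denotes the degree of $w$ in the replacement graph $G_{|w|}$.
   Context: A graph is a pair $(V,E)$ with $V$ finite non-empty and $E\subseteq V\times V$ such that $(x,y)\in E$ implies $(y,x)\notin E$; write $\{x,y\}\in E$ if $(x,y)\in E$ or $(y,x)\in E$. The degree of $x$ is the number of $y$ with $\{x,y\}\in E$. An iterated graph system (IGS) consists of a connected graph $G_1=(S,E)$, a finite set $\mathcal T$ of types, a surjective typing function $\mathfrak t:E\to\mathcal T$, and for each $t\in\mathcal T$ a non-empty set $I_t\subseteq S\times S$ (gluing rules). Let $W_m=S^m$ (words $w=w_1\cdots w_m$), $W_\#=\bigcup_{m\ge1}W_m$, $|w|$ the length of $w$, and $[w]_k=w_1\cdots w_k$. The replacement graphs $G_m=(W_m,E_m)$ with typings $\mathfrak t_m:E_m\to\mathcal T$ are defined recursively: $G_1$ and $\mathfrak t_1=\mathfrak t$ are given; for $w,v\in W_{m+1}$, $(w,v)\in E_{m+1}$ iff either (1) $[w]_m=[v]_m$ and $(w_{m+1},v_{m+1})\in E$, in which case $\mathfrak t_{m+1}(w,v)=\mathfrak t(w_{m+1},v_{m+1})$; or (2) $([w]_m,[v]_m)\in E_m$ and $(w_{m+1},v_{m+1})\in I_{\mathfrak t_m([w]_m,[v]_m)}$, in which case $\mathfrak t_{m+1}(w,v)=\mathfrak t_m([w]_m,[v]_m)$. For $t\in\mathcal T$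 and $w\in S$ let $\mathfrak b_t^+(w)=|\{v\in S:(w,v)\in I_t\}|$, $\mathfrak b_t^-(w)=|\{v\in S:(v,w)\in I_t\}|$, $\deg_t^+(w)=|\{v:(w,v)\in E,\ \mathfrak t(w,v)=t\}|$ and $\deg_t^-(w)=|\{v:(v,w)\in E,\ \mathfrak t(v,w)=t\}|$. Condition (GR1): $\mathfrak b_t^\star(w)\in\{0,1\}$ for all $t\in\mathcal T$, $\star\in\{+,-\}$, $w\in S$. Condition (GR2): for all $t\in\mathcal T$, $\star\in\{+,-\}$, $w\in S$, the numbers $\mathfrak b_t^\star(w)$ and $\deg_t^\star(w)$ are never simultaneously non-zero. *)

(* Defs.v *)
From mathcomp Require Import all_boot.
Set Implicit Arguments. Unset Strict Implicit. Unset Printing Implicit Defensive.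

(* Iterated graph systems (IGS).
   - S : finType is the vertex set of G_1 = (S, E); E : rel S is the set of
     directed edges (x,y).
   - T : finType is the set of types; tp : S -> S -> T is the typing function
     (only its values on E matter).
   - I : T -> rel S gives the gluing rules I_t. *)

Section IGS.
Variables (S T : finType) (E : rel S) (tp : S -> S -> T) (I : T -> rel S).

Definition is_IGS : Prop :=
  [/\ (0 < #|S|)%N,
      (forall x y, E x y -> ~~ E y x),
      (forall x y, connect (fun a b => E a b || E b a) x y),
      (forall t, exists x y, E x y && (tp x y == t))
    & (forall t, exists x y, I t x y)].

(* Edges of the replacement graphs, with their types.  [rep_edge_rev rw rv]
   works on REVERSED words (last letter first): for w = [w]_m w_{m+1},
   v = [v]_m v_{m+1} (both of length m+1) it returns
     Some t  iff (w,v) ∈ E_{m+1} with t_{m+1}(w,v) = t, and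
     None    iff (w,v) ∉ E_{m+1}.
   Rule (1): [w]_m = [v]_m and (w_{m+1},v_{m+1}) ∈ E, type t(w_{m+1},v_{m+1});
   rule (2): ([w]_m,[v]_m) ∈ E_m with type t' and (w_{m+1},v_{m+1}) ∈ I_t',
   type t'.  For m = 0 (words of length 1) rule (1) gives exactly G_1 with
   typing tp (the empty prefixes are equal, and the empty word is never an
   edge). *)
Fixpoint rep_edge_rev (rw rv : seq S) : option T :=
  match rw, rv with
  | a :: rw', b :: rv' =>
      if rw' == rv' then (if E a b then Some (tp a b) else None)
      else match rep_edge_rev rw' rv' with
           | Some t => if I t a b then Some t else None
           | None => None
           end
  | _, _ => None
  end.

Definition rep_edge (w v : seq S) : bool :=
  rep_edge_rev (rev w) (rev v) != None.

Definition rep_deg (m : nat) (w : m.-tuple S) : nat :=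
  #|[pred v : m.-tuple S | rep_edge w v || rep_edge v w]|.

Definition b_plus (t : T) (w : S) : nat := #|[pred v | I t w v]|.
Definition b_minus (t : T) (w : S) : nat := #|[pred v | I t v w]|.
Definition deg_plus (t : T) (w : S) : nat :=
  #|[pred v | E w v && (tp w v == t)]|.
Definition deg_minus (t : T) (w : S) : nat :=
  #|[pred v | E v w && (tp v w == t)]|.

Definition GR1 : Prop :=
  forall t w, (b_plus t w <= 1)%N /\ (b_minus t w <= 1)%N.

Definition GR2 : Prop :=
  forall t w, ~ ((0 < b_plus t w)%N /\ (0 < deg_plus t w)%N) /\
              ~ ((0 < b_minus t w)%N /\ (0 < deg_minus t w)%N).

Definition uniformly_bounded_degree : Prop :=
  exists B : nat, forall (m : nat) (w : m.-tuple S),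
    (0 < m)%N -> (rep_deg w <= B)%N.

End IGS.

(* Main.v *)
Require Import Defs.
From mathcomp Require Import all_boot zify.
Set Implicit Arguments. Unset Strict Implicit. Unset Printing Implicit Defensive.

Lemma rer_irr (S T : finType) (E : rel S) (tp : S -> S -> T) (I : T -> rel S) :
  (forall x, ~~ E x x) -> forall r, rep_edge_rev E tp I r r = None.
Proof.
move=> irr [|a r] //=; rewrite eqxx; by rewrite (negbTE (irr a)).
Qed.

Lemma rer_base (S T : finType) (E : rel S) (tp : S -> S -> T) (I : T -> rel S) a z r :
  E a z -> rep_edge_rev E tp I (a :: r) (z :: r) = Some (tp a z).
Proof. by move=> H /=; rewrite eqxx H. Qed.

Lemma rer_lift (S T : finType) (E : rel S) (tp : S -> S -> T) (I : T -> rel S) :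
  (forall x, ~~ E x x) -> forall t a q rw rv,
  rep_edge_rev E tp I rw rv = Some t -> all (I t a) q ->
  rep_edge_rev E tp I (nseq (size q) a ++ rw) (q ++ rv) = Some t.
Proof.
move=> irr t a; elim=> [|c q IH] rw rv H //= /andP [Hc Hq].
have := IH _ _ H Hq => H2.
have -> : (nseq (size q) a ++ rw == q ++ rv) = false.
  apply/negP => /eqP Heq; move: H2; by rewrite Heq rer_irr.
by rewrite H2 Hc.
Qed.

Fixpoint dv (S : eqType) (r s : seq S) : nat :=
  match r, s with
  | _ :: r', _ :: s' => if r' == s' then size r' else dv r' s'
  | _, _ => 0
  end.

Lemma dv_lift (S : eqType) (p q r s : seq S) :
  size p = size q -> r != s -> dv (p ++ r) (q ++ s) = dv r s.
Proof.
elim: p q => [|a p IH] [|b q] //= [Hs] Hrs.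
by rewrite eqseq_cat // (negbTE Hrs) andbF IH.
Qed.

Fixpoint key1 (S : eqType) (r s : seq S) : option S :=
  match r, s with
  | _ :: r', b :: s' => if r' == s' then Some b else key1 r' s'
  | _, _ => None
  end.
Fixpoint key2 (S : eqType) (r s : seq S) : option S :=
  match r, s with
  | a :: r', _ :: s' => if r' == s' then Some a else key2 r' s'
  | _, _ => None
  end.

Lemma GR1p (S T : finType) (I : T -> rel S) t a b1 b2 :
  GR1 I -> I t a b1 -> I t a b2 -> b1 = b2.
Proof.
move=> /(_ t a) [H _] H1 H2.
by move/card_le1_eqP: H => H; apply: (H b2 b1); rewrite inE.
Qed.
Lemma GR1m (S T : finType) (I : T -> rel S) t a b1 b2 :
  GR1 I -> I t b1 a -> I t b2 a -> b1 = b2.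
Proof.
move=> /(_ t a) [_ H] H1 H2.
by move/card_le1_eqP: H => H; apply: (H b2 b1); rewrite inE.
Qed.
Lemma GR2p (S T : finType) (E : rel S) (tp : S -> S -> T) (I : T -> rel S) a b z :
  GR2 E tp I -> I (tp a z) a b -> E a z -> False.
Proof.
move=> /(_ (tp a z) a) [H _] H1 H2; apply: H; split; apply/card_gt0P.
  by exists b.
by exists z; rewrite inE H2 eqxx.
Qed.
Lemma GR2m (S T : finType) (E : rel S) (tp : S -> S -> T) (I : T -> rel S) a b z :
  GR2 E tp I -> I (tp z a) b a -> E z a -> False.
Proof.
move=> /(_ (tp z a) a) [_ H] H1 H2; apply: H; split; apply/card_gt0P.
  by exists b.
by exists z; rewrite inE H2 eqxx.
Qed.

Lemma key1_inj (S T : finType) (E : rel S) (tp : S -> S -> T) (I : T -> rel S) :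
  GR1 I -> GR2 E tp I -> forall t rw rv1 rv2,
  rep_edge_rev E tp I rw rv1 = Some t -> rep_edge_rev E tp I rw rv2 = Some t ->
  key1 rw rv1 = key1 rw rv2 -> rv1 = rv2.
Proof.
move=> g1 g2 t; elim=> [|a rw IH] [|b1 r1] [|b2 r2] //=.
case: (eqVneq rw r1) => [<-|n1]; case: (eqVneq rw r2) => [<-|n2].
- by case: (E a b1) => // _; case: (E a b2) => // _ [->].
-   case E1: (E a b1) => //; case=> <-.
  case H2: (rep_edge_rev E tp I rw r2) => [t'|] //.
  case I2: (I t' a b2) => //; case=> Et; subst t'.
  by case: (GR2p g2 I2 E1).
- case H1: (rep_edge_rev E tp I rw r1) => [t'|] //.
  case I1: (I t' a b1) => //; case=> Et; subst t'.
  by case E2: (E a b2) => //; case=> Et; case: (GR2p g2 (etrans (congr1 (fun u => I u a b1) Et) I1) E2).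
- case H1: (rep_edge_rev E tp I rw r1) => [t1|] //.
  case I1: (I t1 a b1) => //; case=> Et; subst t1.
  case H2: (rep_edge_rev E tp I rw r2) => [t2|] //.
  case I2: (I t2 a b2) => //; case=> Et; subst t2 => Hk.
  by rewrite (IH _ _ H1 H2 Hk) (GR1p g1 I1 I2).
Qed.

Lemma key2_inj (S T : finType) (E : rel S) (tp : S -> S -> T) (I : T -> rel S) :
  GR1 I -> GR2 E tp I -> forall t rw rv1 rv2,
  rep_edge_rev E tp I rv1 rw = Some t -> rep_edge_rev E tp I rv2 rw = Some t ->
  key2 rv1 rw = key2 rv2 rw -> rv1 = rv2.
Proof.
move=> g1 g2 t; elim=> [|a rw IH] [|b1 r1] [|b2 r2] //=.
case: (eqVneq r1 rw) => [->|n1]; case: (eqVneq r2 rw) => [->|n2].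
- by case: (E b1 a) => // _; case: (E b2 a) => // _ [->].
- case E1: (E b1 a) => //; case=> <-.
  case H2: (rep_edge_rev E tp I r2 rw) => [t'|] //.
  case I2: (I t' b2 a) => //; case=> Et; subst t'.
  by case: (GR2m g2 I2 E1).
- case H1: (rep_edge_rev E tp I r1 rw) => [t'|] //.
  case I1: (I t' b1 a) => //; case=> Et; subst t'.
  by case E2: (E b2 a) => //; case=> Et; case: (GR2m g2 (etrans (congr1 (fun u => I u b1 a) Et) I1) E2).
- case H1: (rep_edge_rev E tp I r1 rw) => [t1|] //.
  case I1: (I t1 b1 a) => //; case=> Et; subst t1.
  case H2: (rep_edge_rev E tp I r2 rw) => [t2|] //.
  case I2: (I t2 b2 a) => //; case=> Et; subst t2 => Hk.
  by rewrite (IH _ _ H1 H2 Hk) (GR1m g1 I1 I2).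
Qed.

Lemma upper (S T : finType) (E : rel S) (tp : S -> S -> T) (I : T -> rel S) :
  GR1 I -> GR2 E tp I -> forall m (w : m.-tuple S),
  rep_deg E tp I w <= #|{: (option T * option S) + (option T * option S)}|.
Proof.
move=> g1 g2 m w; rewrite /rep_deg.
pose f (v : m.-tuple S) : (option T * option S) + (option T * option S) :=
  if rep_edge E tp I w v then inl (rep_edge_rev E tp I (rev w) (rev v), key1 (rev w) (rev v))
  else inr (rep_edge_rev E tp I (rev v) (rev w), key2 (rev v) (rev w)).
apply: (leq_card_in f) => v1 v2; rewrite !inE /f /rep_edge.
have rinj : forall v1 v2 : m.-tuple S, rev v1 = rev v2 -> v1 = v2.
  by move=> u1 u2 /(congr1 rev); rewrite !revK => /val_inj.
case: eqP => H1 /= A1; case: eqP => H2 /= A2 //.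
- case Hr: (rep_edge_rev E tp I (rev v1) (rev w)) A1 => [t|] // _.
  case=> Hr2 Hk; apply: rinj; exact: (key2_inj g1 g2 Hr (esym Hr2) Hk).
- case Hr: (rep_edge_rev E tp I (rev w) (rev v1)) H1 => [t|] // _.
  case=> Hr2 Hk; apply: rinj. exact: (key1_inj g1 g2 Hr (esym Hr2) Hk).
Qed.

Lemma lower_card (S T : finType) (E : rel S) (tp : S -> S -> T) (I : T -> rel S)
  m (w : m.-tuple S) (L : seq (seq S)) :
  uniq L -> (forall s, s \in L -> size s = m /\ rep_edge_rev E tp I (rev w) s != None) ->
  size L <= rep_deg E tp I w.
Proof.
move=> uL HL.
pose L' := map (fun s => insubd w (rev s)) L.
have vL : forall s, s \in L -> val (insubd w (rev s)) = rev s.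
  by move=> s /HL [Hs _]; rewrite val_insubd size_rev Hs eqxx.
have uL' : uniq L'.
  rewrite map_inj_in_uniq // => s1 s2 H1 H2 /(congr1 val).
  by rewrite vL // vL // => /(congr1 rev); rewrite !revK.
have -> : size L = size L' by rewrite size_map.
rewrite -(card_uniqP uL') /rep_deg; apply: subset_leq_card; apply/subsetP => v.
rewrite /L' => /mapP [s Hs ->]; rewrite inE /rep_edge.
have := congr1 rev (vL s Hs); rewrite revK => ->.
by have [_ ->] := HL s Hs.
Qed.

Lemma bnd (S T : finType) (E : rel S) (tp : S -> S -> T) (I : T -> rel S) :
  uniformly_bounded_degree E tp I -> exists B, forall (s : seq S) (L : seq (seq S)),
  (0 < size s) -> uniq L ->
  (forall q, q \in L -> size q = size s /\ rep_edge_rev E tp I s q != None) ->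
  size L <= B.
Proof.
move=> [B HB]; exists B => s L s0 uL HL.
pose w := in_tuple (rev s).
apply: (leq_trans _ (HB _ w _)); last by rewrite size_rev.
apply: lower_card => // q /HL [H1 H2]; split; first by rewrite size_rev.
by rewrite /= revK.
Qed.

Lemma nseq_split (S : Type) (a x : S) B j : j < B ->
  nseq B a ++ [:: x] = nseq (B - j.+1) a ++ (a :: nseq j a ++ [:: x]).
Proof.
move=> H; have -> : B = (B - j.+1) + j.+1 by lia.
by rewrite nseqD -catA; congr (_ ++ _); rewrite addnK.
Qed.

Lemma core (S T : finType) (E : rel S) (tp : S -> S -> T) (I : T -> rel S) :
  (forall x, ~~ E x x) -> (forall t, exists x y, E x y && (tp x y == t)) ->
  uniformly_bounded_degree E tp I ->
  forall t a, b_plus I t a <= 1 /\ ~ (0 < b_plus I t a /\ 0 < deg_plus E tp t a).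
Proof.
move=> irr surj /bnd [B HB] t a.
have [x [y /andP [Exy /eqP txy]]] := surj t.
have xy : [:: x] != [:: y].
  by apply/negP => /eqP [Hxy]; move: Exy; rewrite Hxy (negbTE (irr y)).
have base : rep_edge_rev E tp I [:: x] [:: y] = Some t by rewrite rer_base // txy.
split.
  rewrite leqNgt; apply/negP => /card_gt1P [b1 [b2 [H1 H2 Hne]]].
  rewrite !inE in H1 H2.
  pose L := map (fun i => nseq i b1 ++ nseq (B - i) b2 ++ [:: y]) (iota 0 B.+1).
  suff : size L <= B by rewrite size_map size_iota ltnn.
  apply: (HB (nseq B a ++ [:: x])); first by rewrite size_cat addn1.
    rewrite map_inj_in_uniq ?iota_uniq // => i j Hi Hj /(congr1 (count (pred1 b1))).
    rewrite !count_cat !count_nseq /= eqxx eq_sym (negbTE Hne).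
    rewrite mem_iota in Hi Hj; lia.
  move=> q /mapP [i Hi ->]; rewrite mem_iota in Hi.
  split; first by rewrite !size_cat !size_nseq /=; lia.
  rewrite catA.
  rewrite (_ : nseq B a = nseq (size (nseq i b1 ++ nseq (B - i) b2)) a); last by rewrite size_cat !size_nseq; congr nseq; lia.
  by rewrite (rer_lift irr base) // all_cat !all_nseq H1 H2 !orbT.
move=> [/card_gt0P [c Hc] /card_gt0P [z /andP [Eaz /eqP taz]]].
rewrite !inE in Hc.
have az : a != z by apply/negP => /eqP Haz; move: Eaz; rewrite Haz (negbTE (irr z)).
pose g j := nseq (B - j.+1) c ++ z :: nseq j a ++ [:: x].
pose L := (nseq B c ++ [:: y]) :: map g (iota 0 B).
suff : size L <= B by rewrite /= size_map size_iota ltnn.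
apply: (HB (nseq B a ++ [:: x])); first by rewrite size_cat addn1.
  apply: (@map_uniq _ _ (dv (nseq B a ++ [:: x]))).
  have -> : map (dv (nseq B a ++ [:: x])) L = iota 0 B.+1.
    rewrite /= dv_lift ?size_nseq //=; congr (_ :: _).
    rewrite -map_comp (_ : map _ _ = map (addn 1) (iota 0 B)); first by rewrite -iotaDl.
    apply/eq_in_map => j; rewrite mem_iota /= => Hj.
    rewrite (nseq_split a x Hj) /g dv_lift ?size_nseq //=; last first.
      by apply/negP => /eqP [Haz]; move/eqP: az.
    by rewrite eqxx size_cat size_nseq addn1.
  exact: iota_uniq.
move=> q; rewrite inE => /orP [/eqP -> | /mapP [j Hj ->]].
  split; first by rewrite !size_cat !size_nseq.
  have {1}-> : B = size (nseq B c) by rewrite size_nseq.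
  by rewrite (rer_lift irr base) // all_nseq Hc orbT.
rewrite mem_iota /= in Hj.
split; first by rewrite /g !size_cat /= size_cat !size_nseq /=; lia.
rewrite (nseq_split a x Hj) /g.
have {1}-> : B - j.+1 = size (nseq (B - j.+1) c) by rewrite size_nseq.
have bz := rer_base tp I (nseq j a ++ [:: x]) Eaz; rewrite taz in bz.
by rewrite (rer_lift irr bz) // all_nseq Hc orbT.
Qed.

Lemma rer_swap (S T : finType) (E : rel S) (tp : S -> S -> T) (I : T -> rel S) r s :
  rep_edge_rev [rel x y | E y x] (fun x y => tp y x) (fun t => [rel x y | I t y x]) r s
  = rep_edge_rev E tp I s r.
Proof.
elim: r s => [|a r IH] [|b s] //=.
by rewrite eq_sym IH.
Qed.

Theorem lemma3p5 (S T : finType) (E : rel S) (tp : S -> S -> T)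
    (I : T -> rel S) :
  is_IGS E tp I ->
  (GR1 I /\ GR2 E tp I <-> uniformly_bounded_degree E tp I).
Proof.
move=> [_ anti _ surj _].
have irr : forall x, ~~ E x x by move=> x; case Ex: (E x x) => //; have := anti x x Ex; rewrite Ex.
split.
  move=> [g1 g2]; exists #|{: (option T * option S) + (option T * option S)}| => m w _.
  exact: upper.
move=> HB.
have HB' : uniformly_bounded_degree [rel x y | E y x] (fun x y => tp y x)
             (fun t => [rel x y | I t y x]).
  case: HB => B HB; exists B => m w m0; apply: leq_trans _ (HB m w m0).
  rewrite /rep_deg; apply: eq_leq; apply: eq_card => v.
  rewrite /in_mem /= /rep_edge.
  rewrite (rer_swap E tp I (rev w) (rev v)) (rer_swap E tp I (rev v) (rev w)).
  exact: orbC.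
have c1 := core irr surj HB.
have c2 := @core S T [rel x y | E y x] (fun x y => tp y x) (fun t => [rel x y | I t y x])
  irr (fun t => let: ex_intro x (ex_intro y H) := surj t in ex_intro _ y (ex_intro _ x H)) HB'.
split=> t w.
  have [h1 _] := c1 t w; have [h2 _] := c2 t w.
  split; first exact: h1.
  exact h2.
have [_ h1] := c1 t w; have [_ h2] := c2 t w.
split; first exact: h1.
exact h2.
Qed.
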